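(* Let $p,q\ge1$, $N\ge1$, let $\mu$ be a $q\times p$ matrix of measures, and assume $\mathscr M_N$ admits a Gauss--Borel factorization $\mathscr M_N=\mathscr L_N^{-1}\mathscr U_N^{-1}$. Write $N=N_qq+s_q=N_pp+s_p$ with $s_q\in\{0,\dots,q-1\}$, $s_p\in\{0,\dots,p-1\}$. Then \[\mathscr M^{[N+q,N]}=\begin{pmatrix}\mathscr L_N^{-1}\\ L^{[N+q,N]}\end{pmatrix}\mathscr U_N^{-1},\qquad \mathscr M^{[N,N+p]}=\mathscr L_N^{-1}\begin{pmatrix}\mathscr U_N^{-1} & U^{[N,N+p]}\end{pmatrix},\] where $L^{[N+q,N]}\in\mathbb R^{q\times N}$ and $U^{[N,N+p]}\in\mathbb R^{N\times p}$ are given by \[L^{[N+q,N]}=\int x^{N_q}\,\mathfrak X_{[q,s_q]}(x)\,\mathrm d\mu(x)\,A^{[N]}(x),\qquad U^{[N,N+p]}=\int B^{[N]}(x)\,\mathrm d\mu(x)\,\big(\mathfrak X_{[p,s_p]}(x)\big)^\top x^{N_p}.\]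
   Context: All matrices are indexed from $0$. $\mu$ is a $q\times p$ matrix of real measures with finite moments. For $r,n\ge1$, $X^{[n]}_{[r]}(x)$ is the $n\times r$ matrix whose row $k$ is $x^{\lfloor k/r\rfloor}e_{k\bmod r}^\top$ ($e_0,\dots,e_{r-1}$ standard basis of $\mathbb R^r$). Moment matrices: $\mathscr M^{[n,m]}=\int X^{[n]}_{[q]}\,\mathrm d\mu\,(X^{[m]}_{[p]})^\top$, $\mathscr M_n=\mathscr M^{[n,n]}$. A Gauss--Borel factorization is $\mathscr M_N=\mathscr L_N^{-1}\mathscr U_N^{-1}$ with $\mathscr L_N$ nonsingular lower triangular and $\mathscr U_N$ nonsingular upper triangular. $B^{[N]}(x):=\mathscr L_NX^{[N]}_{[q]}(x)$ ($N\times q$) and $A^{[N]}(x):=(X^{[N]}_{[p]}(x))^\top\mathscr U_N$ ($p\times N$). For $0\le s\le r$, $\mathfrak X_{[r,s]}(x)$ is the $r\times r$ block matrix $\begin{pmatrix}0_{(r-s)\times s}&I_{r-s}\\ xI_s&0_{s\times(r-s)}\end{pmatrix}$. *)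

(* Defs.v *)
From HB Require Import structures.
From mathcomp Require Import all_boot all_order all_algebra.
From mathcomp Require Import all_classical all_reals all_analysis.
Set Implicit Arguments. Unset Strict Implicit. Unset Printing Implicit Defensive.
Import Order.TTheory GRing.Theory Num.Theory.
Local Open Scope ring_scope.

(* A real (signed, finite) Borel measure on R, given by a Jordan-type
   decomposition nu = rm_pos - rm_neg into two positive measures. *)
Record realMeasure (R : realType) := RealMeasure {
  rm_pos : {measure set R -> \bar R};
  rm_neg : {measure set R -> \bar R} }.

(* finite moments: every x^k is integrable w.r.t. both parts
   (k = 0 gives finiteness of the measures). *)
Definition finite_moments (R : realType) (nu : realMeasure R) : Prop :=
  forall k : nat,
    (rm_pos nu).-integrable setT (fun x : R => (x ^+ k)%:E) /\
    (rm_neg nu).-integrable setT (fun x : R => (x ^+ k)%:E).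

Definition rmint (R : realType) (nu : realMeasure R) (f : R -> R) : R :=
  Rintegral (rm_pos nu) setT f - Rintegral (rm_neg nu) setT f.

(* matrix integral  \int F(x) dmu(x) G(x)  for a q x p matrix of measures mu *)
Definition mxint (R : realType) (q p n m : nat) (F : R -> 'M[R]_(n, q))
  (mu : 'I_q -> 'I_p -> realMeasure R) (G : R -> 'M[R]_(p, m)) : 'M[R]_(n, m) :=
  \matrix_(i < n, j < m)
    \sum_(a < q) \sum_(b < p) rmint (mu a b) (fun x => F x i a * G x b j).

Definition Xmx (R : realType) (n r : nat) (x : R) : 'M[R]_(n, r) :=
  \matrix_(k < n, j < r) (x ^+ (k %/ r)%N * (j == (k %% r)%N :> nat)%:R).

Definition moment (R : realType) (q p : nat) (mu : 'I_q -> 'I_p -> realMeasure R)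
  (n m : nat) : 'M[R]_(n, m) :=
  mxint (fun x => Xmx n q x) mu (fun x => (Xmx m p x)^T).

Definition gauss_borel (R : realType) (N : nat) (M L U : 'M[R]_N) : Prop :=
  [/\ is_trig_mx L, L \in unitmx, is_trig_mx U^T, U \in unitmx &
      M = invmx L *m invmx U].

(* \mathfrak X_{[r,s]}(x) = ( 0_{(r-s) x s}  I_{r-s} ; x I_s  0_{s x (r-s)} ) *)
Definition frakX (R : realType) (r s : nat) (x : R) : 'M[R]_r :=
  \matrix_(i < r, j < r)
    if (i < r - s)%N then (j == (i + s)%N :> nat)%:R
    else if (j == (i - (r - s))%N :> nat) then x else 0.

Definition Bvec (R : realType) (N q : nat) (L : 'M[R]_N) (x : R) : 'M[R]_(N, q) :=
  L *m Xmx N q x.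
Definition Avec (R : realType) (N p : nat) (U : 'M[R]_N) (x : R) : 'M[R]_(p, N) :=
  (Xmx N p x)^T *m U.

(* Main.v *)
Require Import Defs.
From HB Require Import structures.
From mathcomp Require Import all_boot all_order all_algebra.
From mathcomp Require Import all_classical all_reals all_analysis.
From mathcomp Require Import zify.
Set Implicit Arguments. Unset Strict Implicit.
Import Order.TTheory GRing.Theory Num.Theory.

Local Open Scope ring_scope.

Section H.
Variable R : realType.

Definition ispoly (f : R -> R) := exists P : {poly R}, forall x, f x = P.[x].

Lemma ispoly_cst c : ispoly (fun _ => c).
Proof. by exists c%:P => x; rewrite hornerC. Qed.

Lemma ispoly_X : ispoly (fun x => x).
Proof. by exists 'X => x; rewrite hornerX. Qed.

Lemma ispoly_exp k : ispoly (fun x => x ^+ k).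
Proof. by exists ('X^k) => x; rewrite hornerXn. Qed.

Lemma ispoly_add f g : ispoly f -> ispoly g -> ispoly (fun x => f x + g x).
Proof. by move=> [P hP] [Q hQ]; exists (P + Q) => x; rewrite hornerD hP hQ. Qed.

Lemma ispoly_mul f g : ispoly f -> ispoly g -> ispoly (fun x => f x * g x).
Proof. by move=> [P hP] [Q hQ]; exists (P * Q) => x; rewrite hornerM hP hQ. Qed.

Lemma ispoly_sum n (f : 'I_n -> R -> R) : (forall j, ispoly (f j)) ->
  ispoly (fun x => \sum_(j < n) f j x).
Proof.
move=> hf; have [P hP] := boolp.choice hf.
by exists (\sum_(j < n) P j) => x; rewrite horner_sum; apply: eq_bigr => j _.
Qed.

Lemma ispoly_ext f g : (forall x, f x = g x) -> ispoly f -> ispoly g.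
Proof. by move=> e [P hP]; exists P => x; rewrite -e. Qed.

Lemma integ_ispoly (m : {measure set R -> \bar R}) f :
  (forall k : nat, m.-integrable setT (fun x : R => (x ^+ k)%:E)) ->
  ispoly f -> m.-integrable setT (EFin \o f).
Proof.
move=> hm [P hP].
have hs : m.-integrable setT (fun x => (\sum_(i < size P) (P`_i)%:E * (x ^+ i)%:E)%E).
  apply: integrable_sum => // i _; apply: integrableZl => //; exact: hm.
apply: (eq_integrable measurableT _ _ _ hs) => x _ /=.
rewrite hP horner_coef -sumEFin; apply: eq_bigr => i _.
by rewrite EFinM.
Qed.
Lemma Rint_sum (m : {measure set R -> \bar R}) n (f : 'I_n -> R -> R) :
  (forall k : nat, m.-integrable setT (fun x : R => (x ^+ k)%:E)) ->
  (forall j, ispoly (f j)) ->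
  Rintegral m setT (fun x => \sum_(j < n) f j x) =
  \sum_(j < n) Rintegral m setT (f j).
Proof.
move=> hm hf; elim: n f hf => [|n IH] f hf.
  under eq_Rintegral do rewrite big_ord0.
  by rewrite big_ord0 Rintegral_cst // mul0r.
under eq_Rintegral do rewrite big_ord_recr.
rewrite big_ord_recr /= RintegralD //.
- by rewrite IH.
- apply: integ_ispoly => //; apply: ispoly_sum => j; exact: hf.
- exact: integ_ispoly.
Qed.

Lemma rmint_lin (nu : realMeasure R) n (f : 'I_n -> R -> R) (c : 'I_n -> R) :
  finite_moments nu -> (forall j, ispoly (f j)) ->
  rmint nu (fun x => \sum_(j < n) f j x * c j) = \sum_(j < n) rmint nu (f j) * c j.
Proof.
move=> hnu hf; rewrite /rmint.
have hp k : (rm_pos nu).-integrable setT (fun x : R => (x ^+ k)%:E) by case: (hnu k).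
have hn k : (rm_neg nu).-integrable setT (fun x : R => (x ^+ k)%:E) by case: (hnu k).
have hf' j : ispoly (fun x => f j x * c j) by apply: ispoly_mul => //; exact: ispoly_cst.
rewrite (Rint_sum hp hf') (Rint_sum hn hf') -sumrB.
apply: eq_bigr => j _; rewrite !RintegralZr //; first by rewrite mulrBl.
- exact: integ_ispoly.
- exact: integ_ispoly.
Qed.
End H.
Section M.
Variable R : realType.

Definition polymx m n (F : R -> 'M[R]_(m, n)) := forall i j, ispoly (fun x => F x i j).

Lemma polymx_Xmx n r : polymx (fun x => Xmx n r x).
Proof.
move=> i j; apply: (ispoly_ext (f:=(fun x => x ^+ (i %/ r)%N * (j == (i %% r)%N :> nat)%:R))).
  by move=> x; rewrite mxE.
by apply: ispoly_mul; [apply: ispoly_exp | apply: ispoly_cst].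
Qed.

Lemma polymx_tr m n (F : R -> 'M[R]_(m, n)) : polymx F -> polymx (fun x => (F x)^T).
Proof. by move=> h i j; apply: (ispoly_ext _ (h j i)) => x; rewrite mxE. Qed.

Lemma polymx_cst m n (C : 'M[R]_(m, n)) : polymx (fun _ => C).
Proof. by move=> i j; apply: ispoly_cst. Qed.

Lemma polymx_mul m n k (F : R -> 'M[R]_(m, n)) (G : R -> 'M[R]_(n, k)) :
  polymx F -> polymx G -> polymx (fun x => F x *m G x).
Proof.
move=> hF hG i j.
apply: (ispoly_ext (f:=(fun x => \sum_(l < n) F x i l * G x l j))).
  by move=> x; rewrite mxE.
by apply: ispoly_sum => l; apply: ispoly_mul.
Qed.

Lemma polymx_scale m n k (F : R -> 'M[R]_(m, n)) :
  polymx F -> polymx (fun x => x ^+ k *: F x).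
Proof.
move=> hF i j; apply: (ispoly_ext (f:=(fun x => x ^+ k * F x i j))).
  by move=> x; rewrite mxE.
by apply: ispoly_mul => //; apply: ispoly_exp.
Qed.

Lemma polymx_frakX r s : polymx (fun x => frakX r s x).
Proof.
move=> i j; rewrite /frakX.
case: (ltnP i (r - s)) => h.
  by apply: (ispoly_ext (f:=(fun _ => (j == (i + s)%N :> nat)%:R))) => [x|]; rewrite ?mxE ?h //; apply: ispoly_cst.
case: (eqVneq (j : nat) (i - (r - s))%N) => e.
  by apply: (ispoly_ext (f:=(fun x => x))) => [x|]; rewrite ?mxE ?e ?eqxx ?ifN -?leqNgt //; apply: ispoly_X.
by apply: (ispoly_ext (f:=(fun _ => 0))) => [x|]; rewrite ?mxE ?(negbTE e) ?ifN -?leqNgt //; apply: ispoly_cst.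
Qed.

Lemma mxint_mulmxr q p n m k (F : R -> 'M[R]_(n, q)) (mu : 'I_q -> 'I_p -> realMeasure R)
   (G : R -> 'M[R]_(p, m)) (C : 'M[R]_(m, k)) :
  (forall a b, finite_moments (mu a b)) -> polymx F -> polymx G ->
  mxint F mu G *m C = mxint F mu (fun x => G x *m C).
Proof.
move=> hmu hF hG; apply/matrixP => i l; rewrite !mxE.
transitivity (\sum_(a < q) \sum_(b < p) \sum_(j < m)
   rmint (mu a b) (fun x => F x i a * G x b j) * C j l).
  under eq_bigr => j _ do rewrite mxE big_distrl /=.
  rewrite exchange_big /=; apply: eq_bigr => a _.
  under eq_bigr => j _ do rewrite big_distrl /=.
  by rewrite exchange_big.
apply: eq_bigr => a _; apply: eq_bigr => b _.
rewrite -rmint_lin //; last by move=> j; apply: ispoly_mul.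
congr rmint; apply: boolp.funext => x; rewrite mxE big_distrr /=.
by apply: eq_bigr => j _; rewrite mulrA.
Qed.

Lemma mxint_mulmxl q p n n' m (F : R -> 'M[R]_(n, q)) (mu : 'I_q -> 'I_p -> realMeasure R)
   (G : R -> 'M[R]_(p, m)) (C : 'M[R]_(n', n)) :
  (forall a b, finite_moments (mu a b)) -> polymx F -> polymx G ->
  C *m mxint F mu G = mxint (fun x => C *m F x) mu G.
Proof.
move=> hmu hF hG; apply/matrixP => i l; rewrite !mxE.
transitivity (\sum_(a < q) \sum_(b < p) \sum_(j < n)
   rmint (mu a b) (fun x => F x j a * G x b l) * C i j).
  under eq_bigr => j _ do rewrite mxE mulrC big_distrl /=.
  rewrite exchange_big /=; apply: eq_bigr => a _.
  under eq_bigr => j _ do rewrite big_distrl /=.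
  by rewrite exchange_big.
apply: eq_bigr => a _; apply: eq_bigr => b _.
rewrite -rmint_lin //; last by move=> j; apply: ispoly_mul.
congr rmint; apply: boolp.funext => x; rewrite mxE big_distrl /=.
by apply: eq_bigr => j _; rewrite mulrC mulrA.
Qed.
End M.
Lemma Xmx_shift (R : realType) (r N : nat) (hr : (0 < r)%N) (x : R) (i a : 'I_r) :
  Xmx (N + r) r x (rshift N i) a = x ^+ (N %/ r)%N * frakX r (N %% r)%N x i a.
Proof.
rewrite !mxE /=.
have hs : (N %% r < r)%N := ltn_pmod N hr.
have e : (N + i = N %/ r * r + (N %% r + i))%N by rewrite {1}(divn_eq N r) addnA.
rewrite e divnMDl // modnMDl.
move: hs; set s := (N %% r)%N => hs.
have hi := ltn_ord i.
case: ltnP => h.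
  have h' : (s + i < r)%N by lia.
  by rewrite (divn_small h') (modn_small h') addn0 addnC.
have e2 : (s + i = 1 * r + (s + i - r))%N by lia.
have h3 : (s + i - r < r)%N by lia.
have e3 : (s + i - r = i - (r - s))%N by lia.
rewrite e2 divnMDl // modnMDl (divn_small h3) (modn_small h3) addn0 e3 addn1 exprSr.
case: eqP => _; first by rewrite mulr1 mulrC.
by rewrite !mulr0.
Qed.

Unset Implicit Arguments.

Theorem mainTheorem5 (R : realType) (p q N : nat)
  (hp : (0 < p)%N) (hq : (0 < q)%N) (hN : (0 < N)%N)
  (mu : 'I_q -> 'I_p -> realMeasure R)
  (hmu : forall a b, finite_moments (mu a b))
  (L U : 'M[R]_N) (hGB : gauss_borel (moment mu N N) L U) :
  moment mu (N + q) N =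
    col_mx (invmx L)
      (mxint (fun x => x ^+ (N %/ q)%N *: frakX q (N %% q)%N x) mu (Avec p U))
    *m invmx U
  /\
  moment mu N (N + p) =
    invmx L *m
      row_mx (invmx U)
        (mxint (Bvec q L) mu (fun x => x ^+ (N %/ p)%N *: (frakX p (N %% p)%N x)^T)).
Proof.
case: hGB => _ uL _ uU hM.
split.
  rewrite -[moment mu (N + q) N]vsubmxK mul_col_mx; congr col_mx.
    rewrite -hM; apply/matrixP => i l; rewrite !mxE.
    apply: eq_bigr => a _; apply: eq_bigr => b _; congr rmint.
    by apply: boolp.funext => x; rewrite !mxE.
  rewrite mxint_mulmxr //; last first.
  - by apply: polymx_mul; [apply: polymx_tr; apply: polymx_Xmx | apply: polymx_cst].
  - by apply: polymx_scale; apply: polymx_frakX.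
  apply/matrixP => i l; rewrite !mxE.
  apply: eq_bigr => a _; apply: eq_bigr => b _; congr rmint.
  apply: boolp.funext => x; rewrite /Avec mulmxK // Xmx_shift //.
  by rewrite !mxE.
rewrite -[moment mu N (N + p)]hsubmxK mul_mx_row; congr row_mx.
  rewrite -hM; apply/matrixP => i l; rewrite !mxE.
  apply: eq_bigr => a _; apply: eq_bigr => b _; congr rmint.
  by apply: boolp.funext => x; rewrite !mxE.
rewrite mxint_mulmxl //; last first.
- by apply: polymx_scale; apply: polymx_tr; apply: polymx_frakX.
- by apply: polymx_mul; [apply: polymx_cst | apply: polymx_Xmx].
apply/matrixP => i l; rewrite !mxE.
apply: eq_bigr => a _; apply: eq_bigr => b _; congr rmint.
apply: boolp.funext => x; rewrite /Bvec mulKmx //.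
rewrite [(Xmx (N + p) p x)^T b (rshift N l)]mxE Xmx_shift //.
by rewrite !mxE.
Qed.
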